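(* $\mathfrak{t}((c_0^+\setminus \ell^1,\leq ^* ))=\mathfrak{t}$.
   Context: $c_0^+$ is the set of all sequences of positive reals converging to $0$, $\ell^1$ the set of real sequences with convergent sum, so $c_0^+\setminus\ell^1$ is the set of positive null sequences with divergent sum. For $\bar f,\bar g\in c_0^+\setminus\ell^1$, $\bar f\leq^*\bar g$ means $\{n: f_n>g_n\}$ is finite. For an ordering $P$, $\mathfrak{t}(P)$ is the least cardinal $\kappa$ such that there is a decreasing (well-ordered) chain of length $\kappa$ in $P$ with no lower bound in $P$. $\mathfrak{t}$ is the tower number, i.e. $\mathfrak{t}(([\omega]^\omega,\subseteq^* ))$: the least length of a $\subseteq^*$-decreasing well-ordered sequence of infinite subsets of $\omega$ with no infinite pseudo-intersection. *)

(* Defs.v *)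
From Stdlib Require Import Reals Lra Wellfounded.
Open Scope R_scope.

Definition strict_wellorder (I : Type) (lt : I -> I -> Prop) : Prop :=
  (forall i, ~ lt i i) /\
  (forall i j k, lt i j -> lt j k -> lt i k) /\
  (forall i j, lt i j \/ i = j \/ lt j i) /\
  well_founded lt.

Definition unbounded_decreasing_chain (T : Type) (S : T -> Prop)
  (le : T -> T -> Prop) (I : Type) (lt : I -> I -> Prop) : Prop :=
  exists f : I -> T,
    (forall i, S (f i)) /\
    (forall i j, lt i j -> le (f j) (f i)) /\
    ~ (exists b, S b /\ forall i, le b (f i)).

(** [tower_le P Q] : every unbounded decreasing well-ordered chain in P can be
    matched by one in Q whose index set has cardinality at most that of P's.
    [t(P) = t(Q)] is expressed as [tower_le P Q /\ tower_le Q P]. *)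
Definition tower_le (T1 : Type) (S1 : T1 -> Prop) (le1 : T1 -> T1 -> Prop)
  (T2 : Type) (S2 : T2 -> Prop) (le2 : T2 -> T2 -> Prop) : Prop :=
  forall (I : Type) (ltI : I -> I -> Prop),
    strict_wellorder I ltI ->
    unbounded_decreasing_chain T1 S1 le1 I ltI ->
    exists (J : Type) (ltJ : J -> J -> Prop),
      strict_wellorder J ltJ /\
      unbounded_decreasing_chain T2 S2 le2 J ltJ /\
      exists g : J -> I, forall x y, g x = g y -> x = y.

Definition tower_num_eq (T1 : Type) (S1 : T1 -> Prop) (le1 : T1 -> T1 -> Prop)
  (T2 : Type) (S2 : T2 -> Prop) (le2 : T2 -> T2 -> Prop) : Prop :=
  tower_le T1 S1 le1 T2 S2 le2 /\ tower_le T2 S2 le2 T1 S1 le1.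

Definition c0plus_not_l1 (f : nat -> R) : Prop :=
  (forall n, 0 < f n) /\ Un_cv f 0 /\ ~ (exists l, infinite_sum f l).

Definition seq_le_star (f g : nat -> R) : Prop :=
  exists N, forall n, (N <= n)%nat -> f n <= g n.

Definition infinite_subset (A : nat -> Prop) : Prop :=
  forall N, exists n, (N <= n)%nat /\ A n.

Definition subset_star (A B : nat -> Prop) : Prop :=
  exists N, forall n, A n -> ~ B n -> (n < N)%nat.

(* Main.v *)
Require Import Defs.
From Stdlib Require Import Reals Lra Lia Cantor List Wellfounded.
From Stdlib Require Import Classical ClassicalDescription IndefiniteDescription
  FunctionalExtensionality ProofIrrelevance.
Open Scope R_scope.

Fixpoint psum (u : nat -> R) (n : nat) : R :=
  match n with O => 0 | S m => psum u m + u m end.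

Lemma psum_sum_f (u : nat -> R) n : sum_f_R0 u n = psum u (S n).
Proof. induction n; simpl in *; [lra|]. rewrite IHn. simpl. lra. Qed.

Lemma psum_ext (u v : nat -> R) n : (forall t, (t < n)%nat -> u t = v t) -> psum u n = psum v n.
Proof. induction n; intros H; simpl; [lra|]. rewrite IHn by (intros; apply H; lia). rewrite H by lia. lra. Qed.

Lemma psum_add (u : nat -> R) a L : psum u (a + L) = psum u a + psum (fun t => u (a + t)%nat) L.
Proof. induction L; simpl. rewrite Nat.add_0_r; lra. rewrite Nat.add_succ_r. simpl. rewrite IHL. lra. Qed.

Lemma psum_front (u : nat -> R) n : psum u (S n) = u O + psum (fun t => u (S t)) n.
Proof. induction n; simpl in *. lra. rewrite IHn. lra. Qed.

Lemma psum_nonneg (u : nat -> R) n : (forall t, 0 <= u t) -> 0 <= psum u n.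
Proof. intros H; induction n; simpl; [lra|]. specialize (H n). lra. Qed.

Lemma psum_mono (u : nat -> R) m n : (forall t, 0 <= u t) -> (m <= n)%nat -> psum u m <= psum u n.
Proof. intros H Hmn. induction Hmn; simpl; [lra|]. specialize (H m0). lra. Qed.

Lemma psum_le (u v : nat -> R) n : (forall t, (t < n)%nat -> u t <= v t) -> psum u n <= psum v n.
Proof. induction n; intros H; simpl; [lra|]. assert (psum u n <= psum v n) by (apply IHn; intros; apply H; lia).
 specialize (H n ltac:(lia)). lra. Qed.

Lemma psum_const c n : psum (fun _ => c) n = INR n * c.
Proof. induction n; simpl psum. simpl; lra. rewrite IHn, S_INR. lra. Qed.

Lemma psum_scale c (u : nat -> R) n : psum (fun t => c * u t) n = c * psum u n.
Proof. induction n; simpl; [lra|]. rewrite IHn. lra. Qed.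

Lemma diverge_crit (u : nat -> R) : (forall n, 0 <= u n) ->
  (forall M, exists n, M <= psum u n) -> ~ exists l, infinite_sum u l.
Proof.
  intros Hpos Hunb [l Hl].
  assert (Hb : forall n, psum u n <= l).
  { intros n. destruct (Rle_or_lt (psum u n) l) as [|Hgt]; [assumption|exfalso].
    destruct (Hl (psum u n - l)) as [N HN]; [lra|].
    specialize (HN (max N n) ltac:(lia)). rewrite psum_sum_f in HN.
    assert (psum u n <= psum u (S (max N n))) by (apply psum_mono; [assumption|lia]).
    unfold Rdist in HN. rewrite Rabs_right in HN by lra. lra. }
  destruct (Hunb (l + 1)) as [n Hn]. specialize (Hb n). lra.
Qed.

Lemma converge_crit (u : nat -> R) B : (forall n, 0 <= u n) ->
  (forall n, psum u n <= B) -> exists l, infinite_sum u l.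
Proof.
  intros Hpos Hb.
  destruct (growing_cv (sum_f_R0 u)) as [l Hl].
  - intros n. rewrite !psum_sum_f. simpl. specialize (Hpos (S n)). lra.
  - exists B. intros x [i ->]. rewrite psum_sum_f. apply Hb.
  - exists l. intros eps He. destruct (Hl eps He) as [N HN]. exists N. intros n Hn.
    apply HN. exact Hn.
Qed.

Lemma half_pow_pos k : 0 < (1/2)^k.
Proof. apply pow_lt. lra. Qed.

Lemma half_pow_anti a b : (a <= b)%nat -> (1/2)^b <= (1/2)^a.
Proof.
  intros H. induction H. lra. simpl. assert (0 < (1/2)^m) by apply half_pow_pos. lra.
Qed.

Lemma half_pow_S k : (1/2)^(S k) = (1/2)^k / 2.
Proof. simpl. lra. Qed.

Lemma half_pow_small eps : 0 < eps -> exists N, forall n, (N <= n)%nat -> (1/2)^n < eps.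
Proof.
  intros He. destruct (pow_lt_1_zero (1/2)) with (y := eps) as [N HN].
  rewrite Rabs_right by lra. lra. assumption.
  exists N. intros n Hn. specialize (HN n Hn). rewrite Rabs_right in HN. assumption.
  apply Rle_ge, pow_le. lra.
Qed.

Lemma geom_half n : psum (fun k => (1/2)^k) n = 2 - 2 * (1/2)^n.
Proof. induction n; simpl psum. simpl. lra. rewrite IHn. simpl. lra. Qed.
Definition sincr (z : nat -> nat) := z O = O /\ forall k, (z k < z (S k))%nat.

Lemma sincr_mono z : sincr z -> forall a b, (a <= b)%nat -> (z a <= z b)%nat.
Proof. intros [_ H] a b Hab. induction Hab as [|m Hm IH]. lia. specialize (H m). lia. Qed.

Lemma sincr_lt z : sincr z -> forall a b, (a < b)%nat -> (z a < z b)%nat.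
Proof. intros Hz a b Hab. pose proof (sincr_mono z Hz (S a) b Hab) as Hm. destruct Hz as [_ H]. specialize (H a). lia. Qed.

Lemma sincr_ge z : sincr z -> forall k, (k <= z k)%nat.
Proof. intros [H0 H] k. induction k. lia. specialize (H k). lia. Qed.

Fixpoint blk (z : nat -> nat) (n : nat) : nat :=
  match n with
  | O => O
  | S m => let b := blk z m in if Nat.leb (z (S b)) (S m) then S b else b
  end.

Lemma blk_spec z : sincr z -> forall n, (z (blk z n) <= n < z (S (blk z n)))%nat.
Proof.
  intros Hz n. pose proof Hz as [H0 H]. induction n; simpl.
  - rewrite H0. specialize (H O). lia.
  - destruct (Nat.leb (z (S (blk z n))) (S n)) eqn:E.
    + apply Nat.leb_le in E. specialize (H (S (blk z n))). lia.
    + apply Nat.leb_gt in E. lia.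
Qed.

Lemma blk_unique z : sincr z -> forall k n, (z k <= n < z (S k))%nat -> blk z n = k.
Proof.
  intros Hz k n Hn. pose proof (blk_spec z Hz n) as Hb.
  destruct (Nat.lt_trichotomy (blk z n) k) as [Hl|[He|Hl]]; [exfalso| assumption |exfalso].
  - pose proof (sincr_mono z Hz (S (blk z n)) k Hl). lia.
  - pose proof (sincr_mono z Hz (S k) (blk z n) Hl). lia.
Qed.

Lemma blk_ge z : sincr z -> forall K n, (z K <= n)%nat -> (K <= blk z n)%nat.
Proof.
  intros Hz K n Hn. pose proof (blk_spec z Hz n).
  destruct (Compare_dec.le_lt_dec K (blk z n)) as [|Hl]; [assumption|].
  pose proof (sincr_mono z Hz (S (blk z n)) K Hl). lia.
Qed.

Definition blen (z : nat -> nat) k := (z (S k) - z k)%nat.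

Definition glue (z : nat -> nat) (w : nat -> nat -> R) (n : nat) : R :=
  w (blk z n) (n - z (blk z n))%nat.

Lemma psum_blocks z (u : nat -> R) : sincr z -> forall K,
  psum u (z K) = psum (fun k => psum (fun t => u (z k + t)%nat) (blen z k)) K.
Proof.
  intros Hz K. induction K; simpl.
  - destruct Hz as [H0 _]. rewrite H0. reflexivity.
  - rewrite <- IHK. unfold blen. destruct Hz as [H0 H]. specialize (H K).
    replace (z (S K)) with (z K + (z (S K) - z K))%nat at 1 by lia.
    apply psum_add.
Qed.

Lemma glue_at z w : sincr z -> forall k t, (t < blen z k)%nat -> glue z w (z k + t) = w k t.
Proof.
  intros Hz k t Ht. unfold glue, blen in *. rewrite (blk_unique z Hz k) by lia.
  f_equal. lia.
Qed.

Lemma psum_glue z w : sincr z -> forall K,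
  psum (glue z w) (z K) = psum (fun k => psum (w k) (blen z k)) K.
Proof.
  intros Hz K. rewrite psum_blocks by assumption. apply psum_ext. intros k _.
  apply psum_ext. intros t Ht. apply glue_at; assumption.
Qed.
Definition z1 (k : nat) : nat := (2 ^ k - 1)%nat.

Lemma pow2_pos k : (1 <= 2 ^ k)%nat.
Proof. induction k; simpl; lia. Qed.

Lemma z1_sincr : sincr z1.
Proof. split. reflexivity. intros k. unfold z1. simpl. pose proof (pow2_pos k). lia. Qed.

Lemma z1_blen k : blen z1 k = (2 ^ k)%nat.
Proof. unfold blen, z1. simpl. pose proof (pow2_pos k). lia. Qed.

Definition wA (A : nat -> Prop) (k t : nat) : R :=
  if excluded_middle_informative (A k) then (1/2)^k else (1/4)^k.

Definition fA (A : nat -> Prop) : nat -> R := glue z1 (wA A).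

Lemma quarter_le k : (1/4)^k <= (1/2)^k.
Proof. apply pow_incr. lra. Qed.

Lemma quarter_pos k : 0 < (1/4)^k.
Proof. apply pow_lt. lra. Qed.

Lemma wA_pos A k t : 0 < wA A k t.
Proof. unfold wA. destruct excluded_middle_informative. apply half_pow_pos. apply quarter_pos. Qed.

Lemma wA_le A k t : wA A k t <= (1/2)^k.
Proof. unfold wA. destruct excluded_middle_informative. lra. apply quarter_le. Qed.

Lemma block_const k c : psum (fun _ => c) (blen z1 k) = INR (2^k) * c.
Proof. rewrite z1_blen. apply psum_const. Qed.

Lemma two_half k : INR (2^k) * (1/2)^k = 1.
Proof. rewrite pow_INR. rewrite <- Rpow_mult_distr. replace (INR 2 * (1/2)) with 1. apply pow1.
  simpl INR. lra. Qed.

Lemma two_quarter k : INR (2^k) * (1/4)^k = (1/2)^k.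
Proof. rewrite pow_INR. rewrite <- Rpow_mult_distr. f_equal. simpl INR. lra. Qed.

Lemma fA_pos A n : 0 < fA A n.
Proof. apply wA_pos. Qed.

Lemma fA_null A : Un_cv (fA A) 0.
Proof.
  intros eps He. destruct (half_pow_small eps He) as [N HN]. exists (z1 N). intros n Hn.
  unfold Rdist. rewrite Rminus_0_r. rewrite Rabs_right by (apply Rle_ge, Rlt_le, fA_pos).
  eapply Rle_lt_trans. apply wA_le. apply HN. apply blk_ge. apply z1_sincr. lia.
Qed.

Lemma fA_blocksum_in A k : A k -> psum (wA A k) (blen z1 k) = 1.
Proof.
  intros H. rewrite (psum_ext _ (fun _ => (1/2)^k)).
  rewrite block_const. apply two_half.
  intros t _. unfold wA. destruct excluded_middle_informative; tauto.
Qed.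

Lemma fA_div A : infinite_subset A -> ~ exists l, infinite_sum (fA A) l.
Proof.
  intros HA. apply diverge_crit. intros; apply Rlt_le, fA_pos.
  assert (Hm : forall m : nat, exists K, INR m <= psum (fA A) (z1 K)).
  { induction m as [|m [K HK]].
    - exists O. simpl. lra.
    - destruct (HA K) as [k [Hk Ak]]. exists (S k).
      unfold fA. rewrite psum_glue by apply z1_sincr. simpl psum.
      rewrite <- psum_glue by apply z1_sincr. rewrite fA_blocksum_in by assumption.
      assert (psum (fA A) (z1 K) <= psum (glue z1 (wA A)) (z1 k)).
      { apply psum_mono. intros; apply Rlt_le, fA_pos. apply sincr_mono. apply z1_sincr. assumption. }
      rewrite S_INR. unfold fA in *. lra. }
  intros M. destruct (INR_unbounded M) as [m Hm']. destruct (Hm m) as [K HK]. exists (z1 K). lra.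
Qed.

Lemma fA_c0 A : infinite_subset A -> c0plus_not_l1 (fA A).
Proof. intros H. split; [apply fA_pos|split; [apply fA_null|apply fA_div; assumption]]. Qed.

Lemma fA_mono A B : subset_star A B -> seq_le_star (fA A) (fA B).
Proof.
  intros [N HN]. exists (z1 N). intros n Hn. unfold fA, glue.
  pose proof (blk_ge z1 z1_sincr N n Hn) as Hk.
  unfold wA. destruct (excluded_middle_informative (A (blk z1 n))) as [Ha|Ha];
  destruct (excluded_middle_informative (B (blk z1 n))) as [Hb|Hb].
  - lra.
  - specialize (HN _ Ha Hb). lia.
  - apply quarter_le.
  - lra.
Qed.

Lemma psum_split_tail (u : nat -> R) N d : (forall k, (N <= k)%nat -> u k <= (1/2)^k) ->
  psum u (N + d) <= psum u N + psum (fun k => (1/2)^k) (N + d).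
Proof.
  intros H. induction d.
  - rewrite Nat.add_0_r. pose proof (psum_nonneg (fun k => (1/2)^k) N (fun k => Rlt_le _ _ (half_pow_pos k))). lra.
  - rewrite Nat.add_succ_r. simpl. specialize (H (N + d)%nat ltac:(lia)). lra.
Qed.

Lemma fA_key (I : Type) (A : I -> nat -> Prop) (b : nat -> R) :
  c0plus_not_l1 b -> (forall i, seq_le_star b (fA (A i))) ->
  exists C, infinite_subset C /\ forall i, subset_star C (A i).
Proof.
  intros [Hbp [_ Hbd]] Hle.
  set (C := fun k => ~ (forall t, (t < 2 ^ k)%nat -> b (z1 k + t)%nat <= (1/4)^k)).
  exists C. split.
  - intros N. apply NNPP. intros Hno. apply Hbd.
    assert (Hsmall : forall k, (N <= k)%nat -> forall t, (t < 2 ^ k)%nat -> b (z1 k + t)%nat <= (1/4)^k).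
    { intros k Hk. apply NNPP. intros Hc. apply Hno. exists k. split; assumption. }
    set (B := fun k => psum (fun t => b (z1 k + t)%nat) (blen z1 k)).
    assert (HB : forall k, (N <= k)%nat -> B k <= (1/2)^k).
    { intros k Hk. unfold B. rewrite <- two_quarter, <- block_const. apply psum_le.
      intros t Ht. rewrite z1_blen in Ht. apply Hsmall; assumption. }
    apply converge_crit with (B := psum B N + 2). intros; apply Rlt_le, Hbp.
    intros n. eapply Rle_trans. apply psum_mono with (n := z1 (N + n)). intros; apply Rlt_le, Hbp.
    pose proof (sincr_ge z1 z1_sincr (N + n)). lia.
    rewrite psum_blocks by apply z1_sincr. fold B.
    eapply Rle_trans. apply psum_split_tail. exact HB. rewrite geom_half.
    pose proof (half_pow_pos (N + n)). lra.
  - intros i. destruct (Hle i) as [N HN]. exists N. intros k Ck Hnot.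
    destruct (Compare_dec.le_lt_dec N k) as [Hk|Hk]; [exfalso|assumption].
    apply Ck. intros t Ht. eapply Rle_trans. apply HN.
    pose proof (sincr_ge z1 z1_sincr k). lia.
    unfold fA. rewrite glue_at. unfold wA. destruct excluded_middle_informative; [contradiction|lra].
    apply z1_sincr. rewrite z1_blen. assumption.
Qed.

Lemma tower_le_sets_seqs :
  tower_le (nat -> Prop) infinite_subset subset_star (nat -> R) c0plus_not_l1 seq_le_star.
Proof.
  intros I ltI Hwo [A [HAinf [HAdec HAnob]]].
  exists I, ltI. split; [assumption|]. split.
  - exists (fun i => fA (A i)). split; [intros i; apply fA_c0, HAinf|]. split.
    + intros i j Hij. apply fA_mono, HAdec, Hij.
    + intros [b [Hb Hbl]]. apply HAnob. apply (fA_key I A b Hb Hbl).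
  - exists (fun j => j). auto.
Qed.
Definition sel {A : Type} (P : A -> Prop) (d : A) : A :=
  match excluded_middle_informative (exists a, P a) with
  | left H => proj1_sig (constructive_indefinite_description _ H)
  | right _ => d end.

Lemma sel_spec {A : Type} (P : A -> Prop) d : (exists a, P a) -> P (sel P d).
Proof.
  intros H. unfold sel. destruct excluded_middle_informative as [H'|H']; [|contradiction].
  apply (proj2_sig (constructive_indefinite_description _ H')).
Qed.

Definition sparse (e : nat -> nat) (X : nat -> Prop) : Prop :=
  exists N, forall x y, (N <= x)%nat -> X x -> X y -> (x < y)%nat ->
    forall m, (m <= x)%nat -> (e m < y)%nat.

Lemma bound_below (e : nat -> nat) x : exists B, forall m, (m <= x)%nat -> (e m < B)%nat.
Proof.
  induction x as [|x [B HB]].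
  - exists (S (e O)). intros m Hm. assert (m = O) by lia. subst. lia.
  - exists (S (max B (e (S x)))). intros m Hm. destruct (Nat.eq_dec m (S x)).
    + subst. lia.
    + specialize (HB m ltac:(lia)). lia.
Qed.

Definition nxt (e : nat -> nat) (Y : nat -> Prop) (x : nat) : nat :=
  sel (fun y => Y y /\ (x < y)%nat /\ forall m, (m <= x)%nat -> (e m < y)%nat) O.

Lemma nxt_spec e Y x : infinite_subset Y ->
  Y (nxt e Y x) /\ (x < nxt e Y x)%nat /\ forall m, (m <= x)%nat -> (e m < nxt e Y x)%nat.
Proof.
  intros HY. unfold nxt. apply (sel_spec (fun y => Y y /\ (x < y)%nat /\ forall m, (m <= x)%nat -> (e m < y)%nat)). destruct (bound_below e x) as [B HB].
  destruct (HY (S (max x B))) as [y [Hy1 Hy2]]. exists y. split; [assumption|split]. lia.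
  intros m Hm. specialize (HB m Hm). lia.
Qed.

Fixpoint xs (e : nat -> nat) (Y : nat -> Prop) (k : nat) : nat :=
  match k with O => nxt e Y O | S k' => nxt e Y (xs e Y k') end.

Definition thin (e : nat -> nat) (Y : nat -> Prop) : nat -> Prop := fun n => exists k, n = xs e Y k.

Lemma xs_incr e Y : infinite_subset Y -> forall k, (xs e Y k < xs e Y (S k))%nat.
Proof. intros HY k. simpl. apply (nxt_spec e Y (xs e Y k) HY). Qed.

Lemma xs_mono e Y : infinite_subset Y -> forall a b, (a <= b)%nat -> (xs e Y a <= xs e Y b)%nat.
Proof. intros HY a b H. induction H as [|b H IH]. lia. pose proof (xs_incr e Y HY b). lia. Qed.

Lemma xs_ge e Y : infinite_subset Y -> forall k, (k <= xs e Y k)%nat.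
Proof. intros HY k. induction k. lia. pose proof (xs_incr e Y HY k). lia. Qed.

Lemma xs_in e Y : infinite_subset Y -> forall k, Y (xs e Y k).
Proof. intros HY [|k]; simpl; apply (nxt_spec e Y _ HY). Qed.

Lemma thin_sub e Y : infinite_subset Y -> forall n, thin e Y n -> Y n.
Proof. intros HY n [k ->]. apply xs_in, HY. Qed.

Lemma thin_inf e Y : infinite_subset Y -> infinite_subset (thin e Y).
Proof. intros HY N. exists (xs e Y N). split. apply xs_ge, HY. exists N. reflexivity. Qed.

Lemma thin_sparse e Y : infinite_subset Y -> sparse e (thin e Y).
Proof.
  intros HY. exists O. intros x y _ [a ->] [b ->] Hab m Hm.
  assert (a < b)%nat.
  { destruct (Compare_dec.le_lt_dec b a) as [Hba|]; [|assumption].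
    pose proof (xs_mono e Y HY b a Hba). lia. }
  pose proof (xs_mono e Y HY (S a) b H).
  pose proof (proj2 (proj2 (nxt_spec e Y (xs e Y a) HY)) m Hm). simpl in H0. lia.
Qed.

Lemma sparse_sub e X Y : subset_star Y X -> sparse e X -> sparse e Y.
Proof.
  intros [M HM] [N HN]. exists (max N M). intros x y Hx Yx Yy Hxy m Hm.
  assert (X x). { apply NNPP. intros Hn. specialize (HM x Yx Hn). lia. }
  assert (X y). { apply NNPP. intros Hn. specialize (HM y Yy Hn). lia. }
  apply (HN x y); auto. lia.
Qed.
Definition OUT (I : Type) : Prop :=
  exists (J : Type) (ltJ : J -> J -> Prop),
    strict_wellorder J ltJ /\
    unbounded_decreasing_chain (nat -> Prop) infinite_subset subset_star J ltJ /\
    exists g : J -> I, forall x y, g x = g y -> x = y.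

Lemma wf_min (A : Type) (R : A -> A -> Prop) : well_founded R -> forall P : A -> Prop,
  (exists x, P x) -> exists x, P x /\ forall y, R y x -> ~ P y.
Proof.
  intros Hwf P [x Hx]. revert Hx. induction x as [x IH] using (well_founded_ind Hwf). intros Hx.
  destruct (classic (exists y, R y x /\ P y)) as [[y [Hy Py]]|Hno].
  - apply (IH y Hy Py).
  - exists x. split; [assumption|]. intros y Hy Py. apply Hno. eauto.
Qed.

Definition Tstep (I : Type) (lt : I -> I -> Prop) (e : I -> nat -> nat) (i : I)
  (rec : forall j, lt j i -> nat -> Prop) : nat -> Prop :=
  match excluded_middle_informative
    (exists Y, infinite_subset Y /\ forall j (H : lt j i), subset_star Y (rec j H)) with
  | left H => thin (e i) (proj1_sig (constructive_indefinite_description _ H))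
  | right _ => fun _ => True
  end.

Definition Tf (I : Type) (lt : I -> I -> Prop) (wf : well_founded lt) (e : I -> nat -> nat) :
  I -> nat -> Prop := Fix wf (fun _ => nat -> Prop) (Tstep I lt e).

Lemma Tf_eq I lt wf e i : Tf I lt wf e i = Tstep I lt e i (fun j _ => Tf I lt wf e j).
Proof.
  unfold Tf. apply (Fix_eq (R := lt) wf (fun _ => nat -> Prop) (Tstep I lt e)). intros x f g Hfg.
  assert (f = g) as ->; [|reflexivity].
  apply functional_extensionality_dep; intro y. apply functional_extensionality_dep; intro p. apply Hfg.
Qed.

Lemma subset_star_sub (A B C : nat -> Prop) : (forall n, A n -> B n) -> subset_star B C -> subset_star A C.
Proof. intros H [N HN]. exists N. intros n An Cn. apply HN; auto. Qed.

Lemma Tf_good I lt wf e i :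
  (exists Y, infinite_subset Y /\ forall j, lt j i -> subset_star Y (Tf I lt wf e j)) ->
  infinite_subset (Tf I lt wf e i) /\ sparse (e i) (Tf I lt wf e i) /\
  forall j, lt j i -> subset_star (Tf I lt wf e i) (Tf I lt wf e j).
Proof.
  intros Hg. rewrite Tf_eq. unfold Tstep.
  destruct excluded_middle_informative as [H|H]; [|contradiction].
  destruct (constructive_indefinite_description _ H) as [Y [HY HYs]]. simpl.
  split; [apply thin_inf, HY|split; [apply thin_sparse, HY|]].
  intros j Hj. apply subset_star_sub with Y. apply thin_sub, HY. apply HYs, Hj.
Qed.

Lemma sub_wo (I : Type) (lt : I -> I -> Prop) (i0 : I) : strict_wellorder I lt ->
  strict_wellorder {j : I | lt j i0} (fun a b => lt (proj1_sig a) (proj1_sig b)).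
Proof.
  intros [Hirr [Htr [Htot Hwf]]]. split; [|split; [|split]].
  - intros a. apply Hirr.
  - intros a b c. apply Htr.
  - intros [a Ha] [b Hb]. simpl. destruct (Htot a b) as [H|[H|H]]; auto.
    right; left. subst. f_equal. apply proof_irrelevance.
  - apply (Inverse_Image.wf_inverse_image _ _ lt (fun a => proj1_sig a) Hwf).
Qed.

Lemma phase1 (I : Type) (lt : I -> I -> Prop) (e : I -> nat -> nat) :
  strict_wellorder I lt ->
  OUT I \/ exists Z, infinite_subset Z /\ forall i, sparse (e i) Z.
Proof.
  intros Hwo. pose proof Hwo as [Hirr [Htr [Htot Hwf]]].
  set (T := Tf I lt Hwf e).
  set (Good := fun i => exists Y, infinite_subset Y /\ forall j, lt j i -> subset_star Y (T j)).
  destruct (classic (exists i, ~ Good i)) as [Hbad|Hall].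
  - left. destruct (wf_min I lt Hwf _ Hbad) as [i0 [Hi0 Hmin]].
    assert (HG : forall j, lt j i0 -> Good j) by (intros j Hj; apply NNPP, Hmin, Hj).
    exists {j : I | lt j i0}, (fun a b => lt (proj1_sig a) (proj1_sig b)).
    split; [apply sub_wo, Hwo|split].
    + exists (fun a => T (proj1_sig a)). split; [|split].
      * intros [j Hj]. apply (Tf_good I lt Hwf e j (HG j Hj)).
      * intros [a Ha] [b Hb] Hab. simpl in *. apply (Tf_good I lt Hwf e b (HG b Hb)). assumption.
      * intros [B [HB HBs]]. apply Hi0. exists B. split; [assumption|].
        intros j Hj. apply (HBs (exist _ j Hj)).
    + exists (fun a => proj1_sig a). intros [a Ha] [b Hb]. simpl. intros ->. f_equal. apply proof_irrelevance.
  - assert (HG : forall i, Good i) by (intros i; apply NNPP; intros H; apply Hall; eauto).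
    destruct (classic (exists Z, infinite_subset Z /\ forall i, subset_star Z (T i))) as [[Z [HZ HZs]]|Hno].
    + right. exists Z. split; [assumption|]. intros i.
      apply sparse_sub with (T i). apply HZs. apply (Tf_good I lt Hwf e i (HG i)).
    + left. exists I, lt. split; [assumption|split].
      * exists T. split; [|split].
        -- intros i. apply (Tf_good I lt Hwf e i (HG i)).
        -- intros i j Hij. apply (Tf_good I lt Hwf e j (HG j)). assumption.
        -- exact Hno.
      * exists (fun i => i). auto.
Qed.
Definition hP (x : R) (j : nat) : Prop := (1/2)^j <= x /\ (x <= 1 -> x <= 2 * (1/2)^j).
Definition hsel (x : R) : nat := sel (hP x) O.

Lemma hsel_spec x : 0 < x -> hP x (hsel x).
Proof.
  intros Hx. unfold hsel. apply (sel_spec (hP x)).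
  destruct (half_pow_small x Hx) as [N HN].
  destruct (wf_min nat lt Wf_nat.lt_wf (fun j => (1/2)^j <= x)) as [j [Hj Hmin]].
  { exists N. apply Rlt_le, HN. lia. }
  exists j. split; [assumption|]. intros Hx1. destruct j as [|j'].
  - simpl. lra.
  - assert (~ (1/2)^j' <= x) by (apply Hmin; lia). simpl. lra.
Qed.

Definition uu (f : nat -> R) (n : nat) : R := (1/2)^(hsel (f n)).

Lemma uu_pos f n : 0 < uu f n.
Proof. apply half_pow_pos. Qed.

Lemma uu_div f : c0plus_not_l1 f -> forall M, exists n, M <= psum (uu f) n.
Proof.
  intros [Hp [Hc Hd]] M. apply NNPP. intros Hno.
  assert (Hlt : forall n, psum (uu f) n < M).
  { intros n. apply Rnot_le_lt. intros H. apply Hno. eauto. }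
  destruct (Hc 1) as [N0 HN0]; [lra|].
  assert (Hf1 : forall n, (N0 <= n)%nat -> f n <= 2 * uu f n).
  { intros n Hn. specialize (HN0 n Hn). unfold Rdist in HN0. rewrite Rminus_0_r in HN0.
    rewrite Rabs_right in HN0 by (apply Rle_ge, Rlt_le, Hp).
    apply (proj2 (hsel_spec (f n) (Hp n))). lra. }
  apply Hd. apply converge_crit with (B := psum f N0 + 2 * M). intros; apply Rlt_le, Hp.
  intros n. eapply Rle_trans. apply psum_mono with (n := (N0 + n)%nat). intros; apply Rlt_le, Hp. lia.
  rewrite psum_add.
  assert (psum (fun t => f (N0 + t)%nat) n <= psum (fun t => 2 * uu f (N0 + t)%nat) n).
  { apply psum_le. intros t _. apply Hf1. lia. }
  rewrite psum_scale in H.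
  pose proof (psum_add (uu f) N0 n). pose proof (Hlt (N0 + n)%nat).
  pose proof (psum_nonneg (uu f) N0 (fun t => Rlt_le _ _ (uu_pos f t))). lra.
Qed.

Definition gsel (f : nat -> R) (n : nat) : nat :=
  sel (fun c => (n < c)%nat /\ 1/2 <= psum (fun t => uu f (n + t)%nat) (c - n)) O.

Lemma gsel_spec f n : c0plus_not_l1 f ->
  (n < gsel f n)%nat /\ 1/2 <= psum (fun t => uu f (n + t)%nat) (gsel f n - n).
Proof.
  intros Hf. unfold gsel. apply (sel_spec (fun c => (n < c)%nat /\ 1/2 <= psum (fun t => uu f (n + t)%nat) (c - n))). destruct (uu_div f Hf (psum (uu f) n + 1/2)) as [m Hm].
  assert (Hnm : (n < m)%nat).
  { destruct (Compare_dec.le_lt_dec m n) as [H|H]; [|assumption]. exfalso.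
    pose proof (psum_mono (uu f) m n (fun t => Rlt_le _ _ (uu_pos f t)) H). lra. }
  exists m. split; [assumption|]. pose proof (psum_add (uu f) n (m - n)).
  replace (n + (m - n))%nat with m in H by lia. lra.
Qed.

Definition ee (f : nat -> R) (n : nat) : nat := max (hsel (f n)) (gsel f n).

Fixpoint lcode (l : list nat) : nat :=
  match l with nil => O | x :: l' => S (to_nat (x, lcode l')) end.

Lemma lcode_inj l1 l2 : lcode l1 = lcode l2 -> l1 = l2.
Proof.
  revert l2. induction l1 as [|x l1 IH]; intros [|y l2]; cbn [lcode]; intros H; try discriminate; auto.
  apply eq_add_S in H. apply to_nat_inj in H. injection H as -> H. f_equal. apply IH, H.
Qed.

Definition code (k : nat) (p : list nat) : nat := to_nat (k, lcode p).

Lemma code_inj k1 p1 k2 p2 : code k1 p1 = code k2 p2 -> k1 = k2 /\ p1 = p2.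
Proof. unfold code. intros H. apply to_nat_inj in H. injection H as -> H. split; auto. apply lcode_inj, H. Qed.

Lemma code_ge k p : (k <= code k p)%nat.
Proof. unfold code. pose proof (to_nat_non_decreasing k (lcode p)). lia. Qed.

Fixpoint cands (L D : nat) : list (list nat) :=
  match L with
  | O => nil :: nil
  | S L' => flat_map (fun x => map (cons x) (cands L' D)) (seq 0 (S D))
  end.

Lemma cands_in L D p : length p = L -> (forall x, In x p -> (x <= D)%nat) -> In p (cands L D).
Proof.
  revert L. induction p as [|x p IH]; intros L HL Hx.
  - simpl in HL. subst L. simpl. auto.
  - destruct L as [|L]; [discriminate|]. cbn [length] in HL. injection HL as HL.
    cbn [cands]. apply in_flat_map. exists x. split.
    + apply in_seq. specialize (Hx x (or_introl eq_refl)). lia.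
    + apply in_map. apply IH; auto. intros y Hy. apply Hx. right; assumption.
Qed.

Definition maxl (l : list nat) : nat := fold_right max O l.

Lemma maxl_in a l : In a l -> (a <= maxl l)%nat.
Proof. induction l as [|x l IH]; simpl; [tauto|]. intros [H|H]; [subst; lia| specialize (IH H); lia]. Qed.

Definition mass (p : list nat) : R := fold_right (fun x s => (1/2)^x + s) 0 p.

Lemma mass_nth p : mass p = psum (fun t => (1/2)^(nth t p O)) (length p).
Proof.
  induction p as [|x p IH]. reflexivity.
  unfold mass. cbn [fold_right length]. rewrite psum_front. cbn [nth]. fold (mass p). rewrite IH. reflexivity.
Qed.

Lemma nth_map_seq (g : nat -> nat) L t d : (t < L)%nat -> nth t (map g (seq 0 L)) d = g t.
Proof.
  intros Ht. rewrite nth_indep with (d' := g O) by (rewrite length_map, length_seq; lia).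
  rewrite map_nth, seq_nth by lia. reflexivity.
Qed.
Definition Dz (z : nat -> nat) k := z (S (S k)).
Definition valid z k p := length p = blen z k /\ (forall x, In x p -> (x <= Dz z k)%nat) /\ 1/2 <= mass p.
Definition fits (F : nat -> R) z k p := forall t, (t < blen z k)%nat -> (1/2)^(nth t p O) <= F (z k + t)%nat.
Definition Bnd z K := maxl (flat_map (fun k => map (code k) (cands (blen z k) (Dz z k))) (seq 0 K)).

Lemma Bnd_spec z K k p : (k < K)%nat -> valid z k p -> (code k p <= Bnd z K)%nat.
Proof.
  intros Hk [Hl [He _]]. apply maxl_in. apply in_flat_map. exists k. split.
  apply in_seq. lia. apply in_map. apply cands_in; assumption.
Qed.

Definition Xs (F : nat -> R) z : nat -> Prop :=
  fun m => exists k p, m = code k p /\ valid z k p /\ fits F z k p.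

Definition zone (F : nat -> R) z N := forall k, (1 <= k)%nat -> (N <= k)%nat ->
  (forall n, (z k <= n < z (S k))%nat -> (hsel (F n) <= Dz z k)%nat) /\ (gsel F (z k) <= z (S k))%nat.

Lemma zone_exists F z Z : sincr z -> (forall k, Z (z (S k))) -> sparse (ee F) Z -> exists N, zone F z N.
Proof.
  intros Hz HZ [N HN]. exists N. intros k Hk1 HkN.
  pose proof (sincr_ge z Hz k). pose proof (sincr_lt z Hz k (S k) ltac:(lia)).
  pose proof (sincr_lt z Hz (S k) (S (S k)) ltac:(lia)).
  assert (Zk : Z (z k)). { destruct k as [|k']; [lia|]. apply HZ. }
  split.
  - intros n Hn. pose proof (HN (z (S k)) (z (S (S k))) ltac:(lia) (HZ k) (HZ (S k)) ltac:(lia) n ltac:(lia)).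
    unfold ee, Dz in *. lia.
  - pose proof (HN (z k) (z (S k)) ltac:(lia) Zk (HZ k) ltac:(lia) (z k) ltac:(lia)).
    unfold ee in *. lia.
Qed.

Definition pat (F : nat -> R) z k : list nat := map (fun t => hsel (F (z k + t)%nat)) (seq 0 (blen z k)).

Lemma pat_ok F z N k : c0plus_not_l1 F -> sincr z -> zone F z N -> (1 <= k)%nat -> (N <= k)%nat ->
  valid z k (pat F z k) /\ fits F z k (pat F z k).
Proof.
  intros HF Hz HZn Hk1 HkN. destruct (HZn k Hk1 HkN) as [Hh Hg].
  pose proof (sincr_lt z Hz k (S k) ltac:(lia)) as Hzk.
  assert (Hlen : length (pat F z k) = blen z k) by (unfold pat; rewrite length_map, length_seq; reflexivity).
  split; [split; [|split]|].
  - exact Hlen.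
  - intros x Hx. unfold pat in Hx. apply in_map_iff in Hx as [t [<- Ht]]. apply in_seq in Ht.
    apply Hh. unfold blen in Ht. lia.
  - rewrite mass_nth, Hlen.
    rewrite (psum_ext _ (fun t => uu F (z k + t)%nat)).
    + destruct (gsel_spec F (z k) HF) as [_ Hm]. eapply Rle_trans. apply Hm.
      apply psum_mono. intros; apply Rlt_le, uu_pos. unfold blen. lia.
    + intros t Ht. unfold pat. rewrite nth_map_seq by assumption. reflexivity.
  - intros t Ht. unfold pat. rewrite nth_map_seq by assumption.
    apply (proj1 (hsel_spec _ (proj1 HF _))).
Qed.

Lemma Xs_inf F z N : c0plus_not_l1 F -> sincr z -> zone F z N -> infinite_subset (Xs F z).
Proof.
  intros HF Hz HZn M. set (k := max 1 (max M N)).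
  destruct (pat_ok F z N k HF Hz HZn ltac:(lia) ltac:(lia)) as [Hv Hf].
  exists (code k (pat F z k)). split. pose proof (code_ge k (pat F z k)). lia.
  exists k, (pat F z k). auto.
Qed.

Lemma Xs_mono F G z : sincr z -> seq_le_star G F -> subset_star (Xs G z) (Xs F z).
Proof.
  intros Hz [N HN]. exists (S (Bnd z N)). intros m [k [p [-> [Hv Hf]]]] Hnot.
  destruct (Compare_dec.le_lt_dec N k) as [Hk|Hk].
  - exfalso. apply Hnot. exists k, p. split; [reflexivity|split; [assumption|]].
    intros t Ht. eapply Rle_trans. apply Hf, Ht. apply HN. pose proof (sincr_ge z Hz k). lia.
  - pose proof (Bnd_spec z N k p Hk Hv). lia.
Qed.
Definition zfrom (Z : nat -> Prop) (k : nat) : nat :=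
  match k with O => O | S k' => xs (fun _ => O) Z k' end.

Lemma zfrom_sincr Z : infinite_subset Z -> sincr (zfrom Z).
Proof.
  intros HZ. split; [reflexivity|]. intros [|k]; simpl.
  - apply (nxt_spec (fun _ => O) Z O HZ).
  - apply xs_incr, HZ.
Qed.

Lemma zfrom_in Z : infinite_subset Z -> forall k, Z (zfrom Z (S k)).
Proof. intros HZ k. simpl. apply xs_in, HZ. Qed.

Lemma phase2 (I : Type) (lt : I -> I -> Prop) (f : I -> nat -> R) :
  strict_wellorder I lt -> (forall i, c0plus_not_l1 (f i)) ->
  (forall i j, lt i j -> seq_le_star (f j) (f i)) ->
  ~ (exists b, c0plus_not_l1 b /\ forall i, seq_le_star b (f i)) ->
  forall Z, infinite_subset Z -> (forall i, sparse (ee (f i)) Z) -> OUT I.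
Proof.
  intros Hwo Hf Hle Hnob Z HZ HZs.
  set (z := zfrom Z). assert (Hz : sincr z) by apply zfrom_sincr, HZ.
  assert (HZz : forall k, Z (z (S k))) by apply zfrom_in, HZ.
  assert (Hzone : forall i, exists N, zone (f i) z N).
  { intros i. apply (zone_exists (f i) z Z Hz HZz (HZs i)). }
  destruct (classic (exists W, infinite_subset W /\ forall i, subset_star W (Xs (f i) z)))
    as [[W [HW HWs]]|Hno].
  2:{ exists I, lt. split; [assumption|split].
      - exists (fun i => Xs (f i) z). split; [|split].
        + intros i. destruct (Hzone i) as [N HN]. apply (Xs_inf (f i) z N (Hf i) Hz HN).
        + intros i j Hij. apply Xs_mono. assumption. apply Hle, Hij.
        + exact Hno.
      - exists (fun i => i). auto. }
  exfalso. apply Hnob.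
  destruct (classic (exists i : I, True)) as [[i0 _]|HnoI].
  2:{ exists (fA (fun _ => True)). split. apply fA_c0. intros N; exists N; auto.
      intros i. exfalso. apply HnoI. eauto. }
  set (Sk := fun k => exists p, W (code k p) /\ valid z k p).
  set (pk := fun k => sel (fun p => W (code k p) /\ valid z k p) nil).
  assert (Hpk : forall k, Sk k -> W (code k (pk k)) /\ valid z k (pk k)).
  { intros k H. apply (sel_spec (fun p => W (code k p) /\ valid z k p) nil H). }
  set (w := fun k t => if excluded_middle_informative (Sk k) then (1/2)^(nth t (pk k) O) else (1/2)^(Dz z k)).
  set (b := glue z w).
  assert (Hbpos : forall n, 0 < b n).
  { intros n. unfold b, glue, w. destruct excluded_middle_informative; apply half_pow_pos. }
  assert (Hble : forall i, seq_le_star b (f i)).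
  { intros i. destruct (HWs i) as [M HM]. destruct (Hzone i) as [Ni HNi].
    exists (z (max 1 (max M Ni))). intros n Hn.
    pose proof (blk_ge z Hz _ n Hn) as Hk. pose proof (blk_spec z Hz n) as Hb.
    unfold b, glue. set (k := blk z n) in *. set (t := (n - z k)%nat).
    assert (Hn' : n = (z k + t)%nat) by (unfold t; lia).
    assert (Ht : (t < blen z k)%nat) by (unfold t, blen; lia).
    unfold w. destruct excluded_middle_informative as [HS|HS].
    - destruct (Hpk k HS) as [HWk Hv].
      assert (HX : Xs (f i) z (code k (pk k))).
      { apply NNPP. intros Hn2. specialize (HM _ HWk Hn2). pose proof (code_ge k (pk k)). lia. }
      destruct HX as [k' [p' [Heq [_ Hfit]]]]. apply code_inj in Heq as [<- <-].
      rewrite Hn'. apply Hfit, Ht.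
    - destruct (HNi k ltac:(lia) ltac:(lia)) as [Hh _].
      eapply Rle_trans. apply half_pow_anti. apply (Hh n). lia.
      apply (proj1 (hsel_spec _ (proj1 (Hf i) n))). }
  assert (Sinf : forall K, exists k, (K <= k)%nat /\ Sk k).
  { intros K. destruct (HWs i0) as [M0 HM0].
    destruct (HW (max M0 (S (Bnd z K)))) as [m [Hm Wm]].
    assert (HX : Xs (f i0) z m). { apply NNPP. intros Hn2. specialize (HM0 _ Wm Hn2). lia. }
    destruct HX as [k [p [-> [Hv _]]]]. exists k. split.
    - destruct (Compare_dec.le_lt_dec K k) as [|Hk]; [assumption|].
      pose proof (Bnd_spec z K k p Hk Hv). lia.
    - exists p. auto. }
  assert (Hblock : forall k, Sk k -> 1/2 <= psum (w k) (blen z k)).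
  { intros k HS. destruct (Hpk k HS) as [_ [Hl [_ Hm]]].
    rewrite (psum_ext _ (fun t => (1/2)^(nth t (pk k) O))).
    rewrite <- Hl, <- mass_nth. exact Hm.
    intros t _. unfold w. destruct excluded_middle_informative; [reflexivity|contradiction]. }
  exists b. split; [split; [exact Hbpos|split]|exact Hble].
  - intros eps He. destruct (Hble i0) as [N1 HN1]. destruct (proj1 (proj2 (Hf i0)) eps He) as [N2 HN2].
    exists (max N1 N2). intros n Hn. specialize (HN1 n ltac:(lia)). specialize (HN2 n ltac:(lia)).
    unfold Rdist in *. rewrite Rminus_0_r in *. pose proof (Hbpos n). pose proof (proj1 (Hf i0) n).
    rewrite Rabs_right in * by lra. lra.
  - apply diverge_crit. intros; apply Rlt_le, Hbpos.
    assert (Hm : forall m : nat, exists K, INR m / 2 <= psum b (z K)).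
    { induction m as [|m [K HK]].
      - exists O. change (z O) with O. simpl. lra.
      - destruct (Sinf K) as [k [Hk HS]]. exists (S k).
        unfold b. rewrite psum_glue by assumption. simpl psum.
        rewrite <- psum_glue by assumption. pose proof (Hblock k HS).
        assert (psum b (z K) <= psum (glue z w) (z k)).
        { apply psum_mono. intros; apply Rlt_le, Hbpos. apply sincr_mono; assumption. }
        rewrite S_INR. unfold b in *. lra. }
    intros M. destruct (INR_unbounded (2 * M)) as [m Hm']. destruct (Hm m) as [K HK]. exists (z K). lra.
Qed.

Lemma tower_le_seqs_sets :
  tower_le (nat -> R) c0plus_not_l1 seq_le_star (nat -> Prop) infinite_subset subset_star.
Proof.
  intros I lt Hwo [f [Hf [Hle Hnob]]].
  destruct (phase1 I lt (fun i => ee (f i)) Hwo) as [HO|[Z [HZ HZs]]].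
  - exact HO.
  - apply (phase2 I lt f Hwo Hf Hle Hnob Z HZ HZs).
Qed.

Theorem mainTheorem6 :
  tower_num_eq (nat -> R) c0plus_not_l1 seq_le_star
               (nat -> Prop) infinite_subset subset_star.
Proof. split. apply tower_le_seqs_sets. apply tower_le_sets_seqs. Qed.
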